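(* Let $c\geq 1$ be a real number and let $G$ be a finite graph with growth $f_G(r)\leq cr$ for every positive integer $r$. Then $G$ does not contain the $\lceil 2c\rceil\times\lceil 2c\rceil$ grid as a minor.
   Context: The growth of a finite graph $G$ is the function $f_G\colon\mathbb{N}\to\mathbb{N}$ where $f_G(r)$ is the maximum of $|V(H)|$ over all subgraphs $H$ of $G$ of radius at most $r$. For $n\in\mathbb{N}$, the $n\times n$ grid is the graph with vertex set $\{(v_1,v_2): v_1,v_2\in\{1,\dots,n\}\}$ where $(v_1,v_2)$ and $(u_1,u_2)$ are adjacent iff either $v_1=u_1$ and $|v_2-u_2|=1$, or $v_2=u_2$ and $|v_1-u_1|=1$. A graph $H$ is a minor of $G$ if $H$ is isomorphic to a graph obtained from a subgraph of $G$ by contracting edges. *)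

(* Defs.v *)
From HB Require Import structures.
From mathcomp Require Import all_boot all_order all_algebra.
From mathcomp Require Import reals.
Set Implicit Arguments. Unset Strict Implicit. Unset Printing Implicit Defensive.
Import Order.TTheory GRing.Theory Num.Theory.

Definition simple_graph (T : finType) (e : rel T) : Prop :=
  symmetric e /\ irreflexive e.

Definition graph_on (T : finType) (S : {set T}) (F : rel T) : Prop :=
  symmetric F /\ irreflexive F /\ (forall u v, F u v -> (u \in S) && (v \in S)).

Definition is_subgraph (T : finType) (e : rel T) (S : {set T}) (F : rel T) : Prop :=
  graph_on S F /\ (forall u v, F u v -> e u v).

Definition radius_le (T : finType) (S : {set T}) (F : rel T) (r : nat) : Prop :=
  exists2 v, v \in S &
    forall u, u \in S -> exists p : seq T, [/\ path F v p, last v p = u & size p <= r]%N.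

(* f_G(r) <= b, where f_G(r) is the maximum of |V(H)| over all subgraphs H of G
   of radius at most r (unfolded: every such subgraph has at most b vertices). *)
Definition growth_le (R : realType) (T : finType) (e : rel T) (r : nat) (b : R) : Prop :=
  forall (S : {set T}) (F : rel T), is_subgraph e S F -> radius_le S F r ->
    (#|S|%:R <= b)%R.

Definition contract_rel (T : finType) (S : {set T}) (F : rel T) (x y : T) : rel T :=
  fun u v => [&& u \in S :\ y, v \in S :\ y, u != v &
                 [|| F u v, (u == x) && F y v | (v == x) && F u y]].

Inductive contracts_to (T : finType) : {set T} -> rel T -> {set T} -> rel T -> Prop :=
  | contracts_refl (S : {set T}) (F : rel T) : contracts_to S F S F
  | contracts_step (S : {set T}) (F : rel T) (x y : T) (S' : {set T}) (F' : rel T) :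
      F x y -> contracts_to (S :\ y) (contract_rel S F x y) S' F' ->
      contracts_to S F S' F'.

Definition iso_to (V T : finType) (h : rel V) (S : {set T}) (F : rel T) : Prop :=
  exists f : V -> T, [/\ injective f, f @: [set: V] = S &
                        forall a b, h a b = F (f a) (f b)].

Definition is_minor (V T : finType) (h : rel V) (e : rel T) : Prop :=
  exists (S : {set T}) (F : rel T) (S' : {set T}) (F' : rel T),
    [/\ is_subgraph e S F, contracts_to S F S' F' & iso_to h S' F'].

Definition grid_adj (n : nat) : rel ('I_n * 'I_n) :=
  fun v u =>
    ((v.1 == u.1) && ((v.2.+1 == u.2 :> nat) || (u.2.+1 == v.2 :> nat))) ||
    ((v.2 == u.2) && ((v.1.+1 == u.1 :> nat) || (u.1.+1 == v.1 :> nat))).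

(* Main.v *)
Require Import Defs.
From HB Require Import structures.
From mathcomp Require Import all_boot all_order all_algebra.
From mathcomp Require Import reals zify lra.
Import Order.TTheory GRing.Theory Num.Theory.
Set Implicit Arguments. Unset Strict Implicit. Unset Printing Implicit Defensive.


Section P1.
Variable T : finType.

Definition restr (r : rel T) (A : {set T}) : rel T :=
  fun a b => [&& r a b, a \in A & b \in A].

Lemma restr_mono (r r' : rel T) (A B : {set T}) :
  subrel r r' -> A \subset B -> subrel (restr r A) (restr r' B).
Proof.
move=> rr AB a b /and3P[rab aA bA].
by rewrite /restr (rr _ _ rab) (subsetP AB _ aA) (subsetP AB _ bA).
Qed.

Lemma connect_restr_mono (r r' : rel T) (A B : {set T}) x y :
  subrel r r' -> A \subset B -> connect (restr r A) x y -> connect (restr r' B) x y.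
Proof.
move=> rr AB; apply: connect_sub => a b H; apply: connect1.
exact: restr_mono H.
Qed.

Lemma contract_graph_on (S : {set T}) (F : rel T) x y :
  graph_on S F -> graph_on (S :\ y) (contract_rel S F x y).
Proof.
move=> [Fs [Fi Fsup]]; split; [|split].
- move=> u v; rewrite /contract_rel eq_sym (Fs v u) (Fs y u) (Fs v y).
  by case: (u \in _); case: (v \in _); case: (v == u); case: (F u v);
     case: (u == x); case: (v == x); case: (F y v); case: (F u y).
- by move=> u; rewrite /contract_rel eqxx !andbF.
- by move=> u v /and3P[-> -> _].
Qed.

Lemma contract_props (S : {set T}) F S' F' :
  contracts_to S F S' F' -> graph_on S F ->
  exists b : T -> T,
    [/\ S' \subset S, (forall u, u \in S -> b u \in S'),
        (forall u, u \in S' -> b u = u),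
        (forall z u, u \in S -> b u = z ->
            connect (restr F [set w in S | b w == z]) z u) &
        (forall z1 z2, F' z1 z2 -> exists u w,
            [/\ u \in S, w \in S, b u = z1, b w = z2 & F u w])].
Proof.
elim=> {S F S' F'} [S F | S F x y S' F' Fxy Hc IH] Hg.
  exists id; split => //.
  - by move=> z u _ ->; apply: connect0.
  - move=> z1 z2 Fz; have [_ [_ Hsup]] := Hg.
    by case/andP: (Hsup _ _ Fz) => h1 h2; exists z1, z2.
have [Fs [Fi Fsup]] := Hg.
have /andP[xS yS] := Fsup _ _ Fxy.
have xy : x != y by apply: contraTneq Fxy => ->; rewrite Fi.
have [b [S'S bS' bid bconn bedge]] := IH (contract_graph_on x y Hg).
pose b' u := b (if u == y then x else u).
have xSy : x \in S :\ y by rewrite !inE xy.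
have b'S u : u != y -> b' u = b u by rewrite /b' => /negbTE ->.
exists b'; split.
- by apply: (subset_trans S'S); apply: subsetDl.
- move=> u uS; rewrite /b'; case: ifP => uy; first exact: bS'.
  by apply: bS'; rewrite !inE uy uS.
- move=> u uS'; have := subsetP S'S _ uS'; rewrite !inE => /andP[uy _].
  by rewrite b'S // bid.
- have conv : forall z a c, connect (restr (contract_rel S F x y) [set w in S :\ y | b w == z]) a c ->
      connect (restr F [set w in S | b' w == z]) a c.
    move=> z; apply: connect_sub => a c /and3P[].
    rewrite /contract_rel !inE => /and4P[/andP[ay aS] /andP[cy cS] ac Hor] /andP[_ baz] /andP[_ bcz].
    have inA : a \in [set w in S | b' w == z] by rewrite inE aS b'S.
    have inC : c \in [set w in S | b' w == z] by rewrite inE cS b'S.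
    case/or3P: Hor => [Fac | /andP[/eqP ax Fyc] | /andP[/eqP cx Fay]].
    + by apply: connect1; rewrite /restr Fac inA inC.
    + have inY : y \in [set w in S | b' w == z] by rewrite inE yS /b' eqxx -ax.
      have e1 : restr F [set w in S | b' w == z] a y by rewrite /restr inA inY ax Fxy.
      have e2 : restr F [set w in S | b' w == z] y c by rewrite /restr inY inC Fyc.
      exact: connect_trans (connect1 e1) (connect1 e2).
    + have inY : y \in [set w in S | b' w == z] by rewrite inE yS /b' eqxx -cx.
      have e1 : restr F [set w in S | b' w == z] a y by rewrite /restr inA inY Fay.
      have e2 : restr F [set w in S | b' w == z] y c by rewrite /restr inY inC cx Fs Fxy.
      exact: connect_trans (connect1 e1) (connect1 e2).
  move=> z u uS; case: (eqVneq u y) => [-> | uy].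
    rewrite /b' eqxx => bxz.
    have := bconn z x xSy bxz => /conv H.
    apply: (connect_trans H); apply: connect1.
    by rewrite /restr Fxy !inE xS yS /b' eqxx (negbTE xy) bxz eqxx.
  rewrite b'S // => buz; apply: conv; apply: bconn => //.
  by rewrite !inE uy uS.
- move=> z1 z2 /bedge [u [w [uS wS bu bw]]].
  move: uS wS; rewrite !inE => /andP[uy uS] /andP[wy wS].
  rewrite /contract_rel !inE uy uS wy wS /= => /andP[_ Hor].
  case/or3P: Hor => [Fuw | /andP[/eqP ux Fyw] | /andP[/eqP wx Fuy]].
  + by exists u, w; rewrite !b'S.
  + by exists y, w; rewrite yS wS (b'S w wy) /b' eqxx -ux bu.
  + by exists u, y; rewrite yS uS (b'S u uy) /b' eqxx -wx bw.
Qed.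
End P1.

Section Reach.
Variable T : finType.
Variable e : rel T.

Definition conn (A : {set T}) :=
  forall x y, x \in A -> y \in A -> connect (restr e A) x y.

Fixpoint reach (A : {set T}) (w : T) (k : nat) : {set T} :=
  if k is k'.+1 then
    reach A w k' :|: [set u in A | [exists y in reach A w k', e y u]]
  else [set w].

Lemma reach_sub (A : {set T}) w k : w \in A -> reach A w k \subset A.
Proof.
move=> wA; elim: k => [|k IH] /=; first by rewrite sub1set.
rewrite subUset IH /=; apply/subsetP => u; rewrite inE => /andP[] //.
Qed.

Lemma reach_self (A : {set T}) w k : w \in reach A w k.
Proof. by elim: k => [|k IH] /=; rewrite ?inE ?IH ?eqxx. Qed.

Lemma reach_walk (A : {set T}) w k u : u \in reach A w k ->
  exists s, [/\ path (restr e (reach A w k)) w s, last w s = u & size s <= k].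
Proof.
elim: k u => [|k IH] u /=.
  by rewrite inE => /eqP ->; exists [::].
have sub : subrel (restr e (reach A w k)) (restr e (reach A w k.+1)).
  apply: restr_mono => //; rewrite /= subsetUl //.
rewrite inE => /orP[/IH [s [ps ls ss]] | ].
  exists s; split => //; last by apply: leqW.
  exact: sub_path sub _ _ ps.
rewrite inE => /andP[uA /existsP[y /andP[yR eyu]]].
have [s [ps ls ss]] := IH y yR.
exists (rcons s u); rewrite last_rcons size_rcons ltnS ss; split => //.
rewrite rcons_path (sub_path sub ps) /= ls /restr eyu /=.
by rewrite !inE yR /= uA /=; apply/orP; right; apply/existsP; exists y; rewrite yR.
Qed.

Lemma reach_card (A : {set T}) w k : w \in A -> conn A -> minn #|A| k.+1 <= #|reach A w k|.
Proof.
move=> wA cA; elim: k => [|k IH].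
  by rewrite /= cards1 geq_minr.
have sub : reach A w k \subset reach A w k.+1 by rewrite /= subsetUl.
case: (eqVneq (reach A w k.+1) (reach A w k)) => [Heq | Hneq].
  suff : A \subset reach A w k.
    by move/subset_leq_card; rewrite Heq; apply: leq_trans; apply: geq_minl.
  apply/subsetP => u uA.
  have /connectP [s ps ->] := cA w u wA uA.
  suff H : forall x, x \in reach A w k -> path (restr e A) x s -> last x s \in reach A w k.
    exact: H (reach_self A w k) ps.
  elim: s {ps uA} => [|y s IHs] x //= xR /andP[exy ps].
  apply: IHs ps; rewrite -Heq /= !inE.
  case/and3P: exy => exy _ yA.
  by rewrite yA /=; apply/orP; right; apply/existsP; exists x; rewrite xR.
have : reach A w k \proper reach A w k.+1.
  by rewrite properEneq sub andbT eq_sym.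
move/proper_card => H.
move: IH H; set a := #|A|; set b := #|reach A w k|; set b2 := #|reach A w k.+1|.
lia.
Qed.

End Reach.

Lemma restr_graph (T : finType) (e : rel T) (A : {set T}) :
  symmetric e -> irreflexive e -> is_subgraph e A (restr e A).
Proof.
move=> es ei; split; [split; [|split]|].
- by move=> a b; rewrite /restr es; case: (a \in A); case: (b \in A); rewrite ?andbF.
- by move=> a; rewrite /restr ei.
- by move=> a b /and3P[_ -> ->].
- by move=> a b /and3P[].
Qed.

Lemma core (R : realType) (c : R) (T : finType) (e : rel T) (n : nat)
  (X : {set T}) (Y : 'I_n -> {set T}) :
  (1 <= c)%R -> symmetric e -> irreflexive e ->
  (forall r : nat, (0 < r)%N -> growth_le e r (c * r%:R)%R) ->
  (2 * c <= n%:R)%R -> conn e X -> (forall j, conn e (Y j)) ->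
  (forall j k, j != k -> [disjoint Y j & Y k]) ->
  (forall j, exists2 w, w \in X & w \in Y j) ->
  (forall j, #|X| <= #|Y j|)%N -> (1 < #|X|)%N -> False.
Proof.
move=> c1 es ei gr n2c cX cY Ydis XY XYc X2.
set p := #|X|.
have [v vX] : exists v, v \in X by apply/card_gt0P; apply: ltnW.
have Xeq : reach e X v p.-1 = X.
  apply/eqP; rewrite eqEcard reach_sub //=.
  have := @reach_card T e X v p.-1 vX cX; rewrite prednK ?minnn //; lia.
pose w j := odflt v [pick u in X :&: Y j].
have wXY j : w j \in X /\ w j \in Y j.
  rewrite /w; case: pickP => [u|]; first by rewrite inE => /andP[].
  by case: (XY j) => u uX uY /(_ u); rewrite inE uX uY.
pose Ball j := reach e (Y j) (w j) p.-1.
have Ballsub j : Ball j \subset Y j by apply: reach_sub; case: (wXY j).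
have Ballcard j : (p <= #|Ball j|)%N.
  have := @reach_card T e (Y j) (w j) p.-1 (proj2 (wXY j)) (cY j).
  rewrite prednK; last by lia.
  by rewrite (minn_idPr (XYc j)).
pose U (s : seq 'I_n) := foldr (fun j acc => Ball j :|: acc) set0 s.
have Umem s u : u \in U s -> exists2 j, j \in s & u \in Ball j.
  elim: s => [|j s IH] /=; first by rewrite inE.
  rewrite inE => /orP[uB | /IH [k ks uk]]; first by exists j; rewrite ?inE ?eqxx.
  by exists k; rewrite // inE ks orbT.
have Ucard s : uniq s -> (size s * p <= #|U s|)%N.
  elim: s => [|j s IH] //= /andP[js us].
  have dis : [disjoint Ball j & U s].
    rewrite -setI_eq0; apply/eqP/setP => u; rewrite !inE.
    apply/negbTE/negP => /andP[u1 /Umem [k ks u2]].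
    have jk : j != k by apply: contraNneq js => ->.
    by move: (subsetP (Ballsub k) _ u2); rewrite (disjointFr (Ydis j k jk) (subsetP (Ballsub j) _ u1)).
  have := (leq_card_setU (Ball j) (U s)).2; rewrite dis => /eqP ->.
  by rewrite mulSn leq_add ?Ballcard ?IH.
pose Sx := X :|: U (enum 'I_n).
have card_Sx : (n * p <= #|Sx|)%N.
  apply: leq_trans (subset_leq_card (subsetUr X _)).
  by have := Ucard _ (enum_uniq 'I_n); rewrite size_enum_ord.
pose r := (p.-1 + p.-1)%N.
have r0 : (0 < r)%N by lia.
have XS : X \subset Sx by apply: subsetUl.
have := gr r r0 Sx (restr e Sx) (restr_graph Sx es ei).
have walkX u : u \in X -> exists s, [/\ path (restr e Sx) v s, last v s = u & (size s <= p.-1)%N].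
  move=> uX; rewrite -Xeq in uX; have [s [ps ls ss]] := reach_walk uX.
  exists s; split => //; apply: sub_path ps; apply: restr_mono => //.
  by rewrite Xeq.
have rad : radius_le Sx (restr e Sx) r.
  exists v; first by rewrite inE vX.
  move=> u; rewrite inE => /orP[uX | /Umem [j _ uB]].
    have [s [ps ls ss]] := walkX u uX; exists s; split => //; lia.
  have [s1 [ps1 ls1 ss1]] := walkX _ (proj1 (wXY j)).
  have [s2 [ps2 ls2 ss2]] := reach_walk uB.
  exists (s1 ++ s2); rewrite cat_path last_cat size_cat ps1 ls1 ls2; split => //; last by lia.
  apply: sub_path ps2; apply: restr_mono => //.
  apply/subsetP => x xB; rewrite inE; apply/orP; right.
  elim: (enum 'I_n) (mem_enum 'I_n j) => [|k s IH] //=.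
  rewrite inE => /orP[/eqP <- | js]; rewrite inE; first by rewrite xB.
  by rewrite IH ?orbT.
move=> /(_ rad).
have : ((n * p)%:R <= #|Sx|%:R :> R)%R by rewrite ler_nat.
have -> : (r%:R = 2 * p%:R - 2 :> R)%R.
  have -> : r = (2 * p - 2)%N by lia.
  rewrite natrB; last by lia.
  by rewrite natrM.
rewrite natrM.
have p2 : (2 <= p%:R :> R)%R by rewrite ler_nat.
have : (2 * c * p%:R <= n%:R * p%:R :> R)%R.
  by apply: ler_wpM2r => //; lra.
lra.
Qed.

Lemma line_conn (T : finType) (e : rel T) (S S' : {set T}) (F F' : rel T) (b : T -> T)
  (N : nat) (g : 'I_N.+1 -> T) :
  symmetric e -> (forall u v, F u v -> e u v) ->
  (forall z u, u \in S -> b u = z -> connect (restr F [set w in S | b w == z]) z u) ->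
  (forall z1 z2, F' z1 z2 -> exists u w, [/\ u \in S, w \in S, b u = z1, b w = z2 & F u w]) ->
  (forall k, g k \in S) -> (forall k, b (g k) = g k) ->
  (forall k : nat, k < N -> F' (g (inord k)) (g (inord k.+1))) ->
  conn e [set u in S | [exists k, b u == g k]].
Proof.
move=> es Fe bconn bedge gS bg gadj.
set A := [set u in S | [exists k, b u == g k]].
have Asym : symmetric (restr e A).
  by move=> x y; rewrite /restr es; case: (x \in A); case: (y \in A); rewrite ?andbF.
have csym := sym_connect_sym Asym.
have fib k u : u \in S -> b u = g k -> connect (restr e A) (g k) u.
  move=> uS bu; apply: connect_restr_mono (bconn _ _ uS bu) => //.
  apply/subsetP => w; rewrite !inE => /andP[-> /eqP ->] /=.
  by apply/existsP; exists k.
have inA u k : u \in S -> b u = g k -> u \in A.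
  by move=> uS bu; rewrite inE uS; apply/existsP; exists k; rewrite bu.
have chain k : k <= N -> connect (restr e A) (g ord0) (g (inord k)).
  elim: k => [|k IH] hk.
    by have -> : inord 0 = ord0 :> 'I_N.+1 by apply: val_inj; rewrite /= inordK.
  have [u [w [uS wS bu bw Fuw]]] := bedge _ _ (gadj k hk).
  apply: connect_trans (IH (ltnW hk)) _.
  apply: connect_trans (fib _ _ uS bu) _.
  apply: connect_trans (connect1 (_ : restr e A u w)) _.
    by rewrite /restr (Fe _ _ Fuw) (inA _ _ uS bu) (inA _ _ wS bw).
  by rewrite csym; apply: fib.
have root u : u \in A -> connect (restr e A) (g ord0) u.
  rewrite inE => /andP[uS /existsP[k /eqP bu]].
  apply: connect_trans (chain k (ltn_ord k)) _.
  by rewrite inord_val; apply: fib.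
by move=> x y xA yA; have := root x xA; rewrite csym => h; exact: connect_trans h (root y yA).
Qed.

Lemma grid_comb (R : realType) (c : R) (T : finType) (e : rel T) (n : nat)
  (S S' : {set T}) (F F' : rel T) (f : 'I_n * 'I_n -> T) (b : T -> T) :
  (1 <= c)%R -> symmetric e -> irreflexive e ->
  (forall r : nat, (0 < r)%N -> growth_le e r (c * r%:R)%R) ->
  (2 * c <= n%:R)%R -> (1 < n)%N ->
  (forall u v, F u v -> e u v) ->
  S' \subset S -> (forall u, u \in S' -> b u = u) ->
  (forall z u, u \in S -> b u = z -> connect (restr F [set w in S | b w == z]) z u) ->
  (forall z1 z2, F' z1 z2 -> exists u w, [/\ u \in S, w \in S, b u = z1, b w = z2 & F u w]) ->
  injective f -> f @: [set: 'I_n * 'I_n] = S' ->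
  (forall a b, grid_adj a b = F' (f a) (f b)) -> False.
Proof.
case: n f => [|[|m]] f c1 es ei gr n2c n2 // Fe S'S bid bconn bedge finj fim fadj.
have fS' g : f g \in S' by rewrite -fim; apply: imset_f.
have fS g : f g \in S by apply: (subsetP S'S); apply: fS'.
have bf g : b (f g) = f g by apply: bid.
pose Rw (i : 'I_m.+2) := [set u in S | [exists j, b u == f (i, j)]].
pose Cl (j : 'I_m.+2) := [set u in S | [exists i, b u == f (i, j)]].
have inoS k : k < m.+1 -> (inord k : 'I_m.+2).+1 = (inord k.+1 : 'I_m.+2) :> nat.
  by move=> hk; rewrite !inordK // ltnS ltnW.
have cR i : conn e (Rw i).
  apply: (@line_conn T e S S' F F' b m.+1 (fun j => f (i, j))) => //.
  by move=> k hk; rewrite -fadj /grid_adj /= inoS // !eqxx.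
have cC j : conn e (Cl j).
  apply: (@line_conn T e S S' F F' b m.+1 (fun i => f (i, j))) => //.
  by move=> k hk; rewrite -fadj /grid_adj /= inoS // !eqxx ?orbT.
have mem2 (A : 'I_m.+2 -> {set T}) (g : 'I_m.+2 -> 'I_m.+2 -> 'I_m.+2 * 'I_m.+2) :
   (forall i k, f (g i k) \in A i) -> (forall i, injective (g i)) -> forall i, (1 < #|A i|)%N.
  move=> gA ginj i.
  have : [set f (g i ord0); f (g i (inord 1))] \subset A i.
    by apply/subsetP => u; rewrite !inE => /orP[] /eqP ->.
  move/subset_leq_card; apply: leq_trans; rewrite cards2.
  rewrite ltnS lt0b; apply/negP => /eqP H; have := ginj i _ _ (finj _ _ H); move/(congr1 val) => /=; rewrite inordK //.
have Rw2 := mem2 Rw (fun i j => (i, j)).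
have Cl2 := mem2 Cl (fun j i => (i, j)).
have disj (A : 'I_m.+2 -> {set T}) (P : 'I_m.+2 * 'I_m.+2 -> 'I_m.+2) :
   (forall i u, u \in A i -> exists g, b u = f g /\ P g = i) ->
   forall i k, i != k -> [disjoint A i & A k].
  move=> HA i k ik; rewrite -setI_eq0; apply/eqP/setP => u; rewrite !inE.
  apply/negbTE/negP => /andP[/HA [g1 [bu1 p1]] /HA [g2 [bu2 p2]]].
  move: ik; rewrite -p1 -p2; rewrite bu1 in bu2; by rewrite (finj _ _ bu2) eqxx.
have RwD := disj Rw (fun g => g.1) _.
have ClD := disj Cl (fun g => g.2) _.
have [a _ amin] := @arg_minnP _ ord0 xpredT (fun i => #|Rw i|) isT.
have [bb _ bmin] := @arg_minnP _ ord0 xpredT (fun j => #|Cl j|) isT.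
case: (leqP #|Rw a| #|Cl bb|) => hab.
  apply: (@core R c T e m.+2 (Rw a) Cl) => //.
  - apply: ClD => j u; rewrite inE => /andP[_ /existsP[i /eqP ->]].
    by exists (i, j).
  - by move=> j; exists (f (a, j)); rewrite inE fS bf; apply/existsP; [exists j | exists a].
  - by move=> j; apply: leq_trans hab (bmin j isT).
  - apply: Rw2.
    + by move=> i k; rewrite inE fS bf; apply/existsP; exists k.
    + by move=> i x y [].
apply: (@core R c T e m.+2 (Cl bb) Rw) => //.
- apply: RwD => i u; rewrite inE => /andP[_ /existsP[j /eqP ->]].
  by exists (i, j).
- by move=> i; exists (f (i, bb)); rewrite inE fS bf; apply/existsP; [exists i | exists bb].
- by move=> i; apply: leq_trans (ltnW hab) (amin i isT).
- apply: Cl2 => //.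
  + by move=> j i; rewrite inE fS bf; apply/existsP; exists i.
  + by move=> j x y [].
Qed.
Unset Implicit Arguments.
Theorem theorem9 (R : realType) (c : R) (T : finType) (e : rel T) :
  (1 <= c)%R ->
  simple_graph e ->
  (forall r : nat, (0 < r)%N -> growth_le e r (c * r%:R)%R) ->
  ~ is_minor (@grid_adj `|Num.ceil (2 * c)%R|%N) e.
Proof.
move=> c1 [es ei] gr [S [F [S' [F' [[Hg Fe] Hc [f [finj fim fadj]]]]]]].
have [b [S'S bS' bid bconn bedge]] := contract_props Hc Hg.
have n2c : (2 * c <= (`|Num.ceil (2 * c)%R|%N)%:R :> R)%R.
  rewrite natr_absz ger0_norm; first exact: Num.Theory.ceil_ge.
  by rewrite Num.Theory.ceil_ge0; lra.
have n2 : (1 < `|Num.ceil (2 * c)%R|%N)%N.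
  by rewrite -(ler_nat R); apply: le_trans n2c; lra.
exact: (grid_comb c1 es ei gr n2c n2 Fe S'S bid bconn bedge finj fim fadj).
Qed.
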